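(* Let $K$ be a field of characteristic $0$, $S=K[x_1,\dots,x_n]$, and let $I,J\subset S$ be Borel-fixed ideals, where $I$ has minimal monomial generators $f_1,\dots,f_m$ all of the same degree. Fix $t$ and write $$\operatorname{in}_>(Z_t(I,S/J))=\bigoplus_{{\bf u}\subset[m],\ \#{\bf u}=t} e_{\bf u}\otimes L_{\bf u}/J$$ with $L_{\bf u}\supseteq J$ monomial ideals. Then each $L_{\bf u}$ is Borel-fixed.
   Context: A monomial ideal is Borel-fixed if it is invariant under all invertible upper triangular linear changes of coordinates, equivalently (characteristic $0$): for every monomial $fx_j$ in the ideal and every $i<j$, $fx_i$ is in the ideal. Let $F=\bigoplus_{i=1}^m S(-\deg f_i)$ with basis $e_1,\dots,e_m$, $\phi(e_i)=f_i$; $K(I,S/J)=\bigwedge^\bullet F\otimes_S S/J$ is the Koszul complex (differential induced by $\phi$), and $Z_t(I,S/J)$ its module of cycles in position $t$. For ${\bf u}=\{u_1<\dots<u_t\}\subset[m]$, $e_{\bf u}=e_{u_1}\wedge\cdots\wedge e_{u_t}$. Term order: $>_{\rm rev}$ is the degree reverse lexicographic order with $x_1>\cdots>x_n$. For $i_1<\cdots<i_t$, $j_1<\cdots<j_t$, set $e_{i_1}\wedge\cdots\wedge e_{i_t}\succ e_{j_1}\wedge\cdots\wedge e_{j_t}$ if (i) $f_{i_1}\cdots f_{i_t}<_{\rm rev}f_{j_1}\cdots f_{j_t}$, or (ii) $f_{i_1}\cdots f_{i_t}=f_{j_1}\cdots f_{j_t}$ and $x_{i_1}\cdots x_{i_t}>_{\rm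 rev}x_{j_1}\cdots x_{j_t}$ (the index sets compared as monomials in formal variables $x_1>x_2>\cdots$ by degree reverse lex). On terms $e_{\bf u}v$ ($v$ a monomial) set $e_{\bf u}v>e_{{\bf u}'}v'$ if $e_{\bf u}\succ e_{{\bf u}'}$, or $e_{\bf u}=e_{{\bf u}'}$ and $v>_{\rm rev}v'$. Every element of $K_t(I,S/J)$ is uniquely a $K$-linear combination of terms $e_{\bf u}\otimes(v+J)$ with $v$ a monomial not in $J$; its initial term $\operatorname{in}_>(g)$ is the largest such term occurring, and $\operatorname{in}_>(N)$ for a submodule $N$ is the $S$-submodule generated by all $\operatorname{in}_>(g)$, $g\in N$; for $N=Z_t(I,S/J)$ it decomposes as displayed, where $L_{\bf u}$ is the ideal generated by $J$ and the monomials $v$ with $e_{\bf u}\otimes(v+J)\in \operatorname{in}_>(N)$. *)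

(* Defs.v *)
From HB Require Import structures.
From mathcomp Require Import all_boot all_order all_algebra.
From mathcomp Require Import mpoly.
Set Implicit Arguments. Unset Strict Implicit. Unset Printing Implicit Defensive.
Import GRing.Theory.
Local Open Scope ring_scope.

(* x_{i+1} corresponds to the ordinal i : 'I_n, so x_1 > ... > x_n means
   ordinal 0 is the largest variable. *)

(* A monomial ideal is represented by its set of monomials: an upward closed
   (under divisibility) set of exponent vectors. *)
Definition monomial_ideal n (P : 'X_{1..n} -> Prop) : Prop :=
  forall a b : 'X_{1..n}, P a -> P (mnm_add a b).

(* Borel-fixed (char 0 characterization, as in the paper): for every monomial
   f*x_j in the ideal and every i < j, f*x_i is in the ideal. *)
Definition borel_fixed n (P : 'X_{1..n} -> Prop) : Prop :=
  monomial_ideal P /\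
  forall (a : 'X_{1..n}) (i j : 'I_n), (i < j)%N ->
    P (mnm_add a (mnm1 j)) -> P (mnm_add a (mnm1 i)).

Definition revgt k (a b : 'X_{1..k}) : bool :=
  (mdeg b < mdeg a)%N ||
  ((mdeg a == mdeg b) &&
   [exists i : 'I_k, (a i < b i)%N && [forall j : 'I_k, (i < j)%N ==> (a j == b j)]]).

Section Koszul.
Variables (K : fieldType) (n m : nat) (f : 'I_m -> 'X_{1..n})
          (J : pred 'X_{1..n}) (t : nat).

Definition fprod (u : {set 'I_m}) : 'X_{1..n} :=
  \big[@mnm_add n/@mnm0 n]_(i in u) f i.

(* the index set u as a squarefree monomial in formal variables x_1 > x_2 > ... *)
Definition xset (u : {set 'I_m}) : 'X_{1..m} := [multinom (i \in u : nat) | i < m].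

Definition egt (u u' : {set 'I_m}) : bool :=
  revgt (fprod u') (fprod u) ||
  ((fprod u == fprod u') && revgt (xset u) (xset u')).

Definition termgt (u : {set 'I_m}) (v : 'X_{1..n}) (u' : {set 'I_m}) (v' : 'X_{1..n}) : bool :=
  egt u u' || ((u == u') && revgt v v').

(* Elements of the graded pieces of the Koszul complex  /\ F (x) S/J :
   functions from subsets u of [m] to the coefficient of e_u, a polynomial
   taken in normal form modulo J (support disjoint from J). *)
Definition kelt := {set 'I_m} -> {mpoly K[n]}.

Definition redJ (p : {mpoly K[n]}) : {mpoly K[n]} :=
  \sum_(a <- msupp p | ~~ J a) p@_a *: 'X_[a].

Definition in_Kt (g : kelt) : Prop :=
  forall u : {set 'I_m}, (#|u| != t -> g u = 0) /\ redJ (g u) = g u.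

(* g is a cycle: g in K_t and the Koszul differential
   d(e_u (x) a) = sum_j (-1)^(j-1) f_{u_j} e_{u \ u_j} (x) a  vanishes;
   the coefficient of e_w in d g is computed below. *)
Definition kdiff (g : kelt) (w : {set 'I_m}) : {mpoly K[n]} :=
  redJ (\sum_(k : 'I_m | k \notin w)
          ((-1) ^+ #|[set i in w | (i < k)%N]| * 'X_[f k] * g (k |: w))).

Definition cycle_t (g : kelt) : Prop := in_Kt g /\ forall w : {set 'I_m}, kdiff g w = 0.

Definition is_init (g : kelt) (u : {set 'I_m}) (w : 'X_{1..n}) : Prop :=
  w \in msupp (g u) /\
  forall (u' : {set 'I_m}) (v' : 'X_{1..n}), v' \in msupp (g u') -> (u' != u) || (v' != w) ->
    termgt u w u' v'.

Definition eterm (u : {set 'I_m}) (v : 'X_{1..n}) : kelt :=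
  fun u' => if u' == u then redJ 'X_[v] else 0.

Definition kadd (g h : kelt) : kelt := fun u => g u + h u.
Definition kscale (s : {mpoly K[n]}) (g : kelt) : kelt := fun u => redJ (s * g u).

Definition submodule (P : kelt -> Prop) : Prop :=
  P (fun _ : {set 'I_m} => 0) /\ (forall g h, P g -> P h -> P (kadd g h)) /\
  (forall s g, P g -> P (kscale s g)).

Definition gen_submod (G : kelt -> Prop) (h : kelt) : Prop :=
  forall P : kelt -> Prop, submodule P -> (forall g, G g -> P g) -> P h.

Definition in_Zt (h : kelt) : Prop :=
  gen_submod (fun e => exists g u w, cycle_t g /\ is_init g u w /\ e = eterm u w) h.

Definition L_ideal (u : {set 'I_m}) (v : 'X_{1..n}) : Prop :=
  exists w : 'X_{1..n}, lem w v /\ (J w \/ in_Zt (eterm u w)).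

End Koszul.

(* Main.v *)
Require Import Defs.
From HB Require Import structures.
From mathcomp Require Import all_boot all_order all_algebra.
From mathcomp Require Import mpoly.
From mathcomp Require Import ring.
From mathcomp Require Import zify.
Set Implicit Arguments. Unset Strict Implicit. Unset Printing Implicit Defensive.
Import GRing.Theory.

Module P1.
Local Open Scope ring_scope.

Section Rev.
Variable k : nat.
Implicit Types a b c : 'X_{1..k}.

Lemma revgt_irr a : revgt a a = false.
Proof.
rewrite /revgt ltnn eqxx /=; apply/existsP => [[x /andP [] ]]; by rewrite ltnn.
Qed.

Lemma revgt_trans a b c : revgt a b -> revgt b c -> revgt a c.
Proof.
rewrite /revgt => /orP [H1|/andP [/eqP E1 /existsP [x /andP [Hx /forallP Fx]]]] /orP [H2|/andP [/eqP E2 /existsP [y /andP [Hy /forallP Fy]]]].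
- by rewrite (ltn_trans H2 H1).
- by rewrite -E2 H1.
- by rewrite E1 H2.
apply/orP; right; rewrite E1 E2 eqxx /=; apply/existsP.
case: (ltngtP x y) => Hxy.
- exists y; apply/andP; split.
    by have := Fx y; rewrite Hxy /= => /eqP ->.
  apply/forallP => z; apply/implyP => Hz.
  have := Fx z; rewrite (ltn_trans Hxy Hz) /= => /eqP ->.
  by have := Fy z; rewrite Hz.
- exists x; apply/andP; split.
    by have := Fy x; rewrite Hxy /= => /eqP <-.
  apply/forallP => z; apply/implyP => Hz.
  have := Fx z; rewrite Hz /= => /eqP ->.
  by have := Fy z; rewrite (ltn_trans Hxy Hz).
- have Exy : x = y by apply: val_inj.
  subst y; exists x; rewrite (ltn_trans Hx Hy) /=.
  apply/forallP => z; apply/implyP => Hz.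
  have := Fx z; rewrite Hz /= => /eqP ->.
  by have := Fy z; rewrite Hz.
Qed.

Lemma revgt_asym a b : revgt a b -> revgt b a -> False.
Proof. by move=> H1 H2; have := revgt_trans H1 H2; rewrite revgt_irr. Qed.

Lemma revgt_add a b c : revgt (a + c)%MM (b + c)%MM = revgt a b.
Proof.
rewrite /revgt !mdegD ltn_add2r eqn_add2r; congr (_ || (_ && _)).
apply: eq_existsb => x; rewrite !mnmDE ltn_add2r; congr (_ && _).
apply: eq_forallb => z; by rewrite !mnmDE eqn_add2r.
Qed.

Lemma revgt_U (x y : 'I_k) : (x < y)%N -> revgt U_(x)%MM U_(y)%MM.
Proof.
move=> Hxy; rewrite /revgt !mdeg1 ltnn eqxx /=; apply/existsP; exists y.
rewrite !mnm1E eqxx; have -> : (x == y) = false by apply/negbTE; apply/eqP => E; subst; rewrite ltnn in Hxy.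
rewrite /=; apply/forallP => z; apply/implyP => Hz; rewrite !mnm1E.
have -> : (x == z) = false by apply/negbTE; apply/eqP => E; subst; move: (ltn_trans Hxy Hz); rewrite ltnn.
by have -> : (y == z) = false by apply/negbTE; apply/eqP => E; subst; rewrite ltnn in Hz.
Qed.
End Rev.

Section Egt.
Variables (n m : nat) (f : 'I_m -> 'X_{1..n}).
Implicit Types u : {set 'I_m}.

Lemma egt_irr u : egt f u u = false.
Proof. by rewrite /egt !revgt_irr andbF. Qed.

Lemma egt_trans u1 u2 u3 : egt f u1 u2 -> egt f u2 u3 -> egt f u1 u3.
Proof.
rewrite /egt => /orP [H1|/andP [/eqP E1 H1]] /orP [H2|/andP [/eqP E2 H2]].
- by rewrite (revgt_trans H2 H1).
- by rewrite -E2 H1.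
- by rewrite E1 H2.
- by rewrite E1 E2 eqxx (revgt_trans H1 H2) orbT.
Qed.

Lemma egt_asym u1 u2 : egt f u1 u2 -> egt f u2 u1 -> False.
Proof. by move=> H1 H2; have := egt_trans H1 H2; rewrite egt_irr. Qed.

Lemma fprodU1 k u : k \notin u -> Defs.fprod f (k |: u) = (f k + Defs.fprod f u)%MM.
Proof. by move=> Hk; rewrite /Defs.fprod big_setU1. Qed.

Lemma fprodD1 k u : k \in u -> Defs.fprod f u = (f k + Defs.fprod f (u :\ k))%MM.
Proof. by move=> Hk; rewrite /Defs.fprod (big_setD1 k Hk). Qed.
End Egt.

End P1.

Module P2.
Import P1.
Local Open Scope ring_scope.

Section RedJ.
Variables (K : fieldType) (n : nat) (J : pred 'X_{1..n}).
Implicit Types p q : {mpoly K[n]}.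

Lemma redJE p a : (redJ J p)@_a = if J a then 0 else p@_a.
Proof.
rewrite /redJ raddf_sum /=.
under eq_bigr => b _ do rewrite mcoeffZ mcoeffX.
rewrite -big_filter.
case: (boolP (a \in [seq b <- msupp p | ~~ J b])) => Ha.
- rewrite (bigD1_seq a Ha (filter_uniq _ (msupp_uniq p))) /= eqxx mulr1 big1 ?addr0.
    by move: Ha; rewrite mem_filter => /andP [/negbTE -> _].
  by move=> b /negbTE ->; rewrite mulr0.
- rewrite big1_seq; last first.
    by move=> b /andP [_ Hb]; case: eqP => E; [subst; rewrite Hb in Ha | rewrite mulr0].
  move: Ha; rewrite mem_filter negb_and negbK; case: (J a) => //= Ha.
  by apply/esym/memN_msupp_eq0.
Qed.

Definition zJ p := forall a, ~~ J a -> p@_a = 0.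

Lemma redJ0 p : (redJ J p = 0) <-> zJ p.
Proof.
split.
- by move=> H a Ha; have := redJE p a; rewrite H mcoeff0 (negbTE Ha) => ->.
- move=> H; apply mpolyP => a; rewrite redJE mcoeff0; case: ifP => // HJ; apply: H; by rewrite HJ.
Qed.

Lemma redJ_msupp p v : v \in msupp (redJ J p) -> v \in msupp p /\ ~~ J v.
Proof. rewrite !mcoeff_msupp redJE; case: (J v) => /=; [by rewrite eqxx | by move=> ->]. Qed.

Lemma redJK p : redJ J (redJ J p) = redJ J p.
Proof. by apply mpolyP => a; rewrite !redJE; case: (J a). Qed.

Lemma redJ_sub p : zJ (redJ J p - p).
Proof. by move=> a Ha; rewrite mcoeffB redJE (negbTE Ha) subrr. Qed.

Lemma zJ0 : zJ 0. Proof. by move=> a _; rewrite mcoeff0. Qed.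
Lemma zJD p q : zJ p -> zJ q -> zJ (p + q).
Proof. by move=> Hp Hq a Ha; rewrite mcoeffD Hp ?Hq ?addr0. Qed.
Lemma zJN p : zJ p -> zJ (- p).
Proof. by move=> Hp a Ha; rewrite mcoeffN Hp ?oppr0. Qed.
Lemma zJZ c p : zJ p -> zJ (c *: p).
Proof. by move=> Hp a Ha; rewrite mcoeffZ Hp ?mulr0. Qed.
Lemma zJ_sum (I : Type) (r : seq I) (P : pred I) (F : I -> {mpoly K[n]}) :
  (forall x, P x -> zJ (F x)) -> zJ (\sum_(x <- r | P x) F x).
Proof.
move=> H; elim/big_rec: _ => [|x y Px Hy]; first exact: zJ0.
exact: zJD (H x Px) Hy.
Qed.

Hypothesis Jmon : monomial_ideal J.

Lemma zJM p q : zJ q -> zJ (p * q).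
Proof.
move=> Hq a Ha; rewrite mcoeffM big1 // => k /eqP Ek.
rewrite Hq ?mulr0 //; apply/negP => Jk; move/negP: Ha; apply.
by rewrite Ek addmC; apply: Jmon.
Qed.

Lemma redJ_eq p q : zJ (p - q) -> redJ J p = redJ J q.
Proof.
move=> H; apply mpolyP => a; rewrite !redJE; case: ifP => // /negbT Ha.
by apply/eqP; rewrite -subr_eq0 -mcoeffB H.
Qed.
End RedJ.

End P2.

Module P3.
Import P1 P2.
Local Open Scope ring_scope.

Section Kos.
Variables (K : fieldType) (n m : nat) (f : 'I_m -> 'X_{1..n}).
Variables (i j : 'I_n) (tau : 'I_m -> 'I_m).
Local Notation kelt := (kelt K n m).
Local Notation P := {mpoly K[n]}.
Implicit Types (w : {set 'I_m}) (k l : 'I_m).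

Definition sg (w : {set 'I_m}) (k : 'I_m) : P := (-1) ^+ #|[set x in w | (x < k)%N]|.

Lemma sgsq (a : nat) : ((-1) ^+ a * (-1) ^+ a : P) = 1.
Proof. by rewrite -expr2 sqrr_sign. Qed.

Lemma sgsq' w k : sg w k * sg w k = 1.
Proof. exact: sgsq. Qed.

Lemma card_ltU1 (k l : 'I_m) w : k \notin w ->
  #|[set x in k |: w | (x < l)%N]| = (#|[set x in w | (x < l)%N]| + (k < l)%N)%N.
Proof.
move=> Hk; case: (ltnP k l) => Hkl /=.
- have -> : [set x in k |: w | (x < l)%N] = k |: [set x in w | (x < l)%N].
    by apply/setP => x; rewrite !inE; case: eqP => // ->; rewrite Hkl.
  by rewrite cardsU1 inE (negbTE Hk) /= addnC.
- have -> : [set x in k |: w | (x < l)%N] = [set x in w | (x < l)%N].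
    apply/setP => x; rewrite !inE; case: eqP => //= ->.
    by rewrite (negbTE Hk) ltnNge Hkl.
  by rewrite addn0.
Qed.

Lemma sgU1 (k l : 'I_m) w : k \notin w -> sg (k |: w) l = sg w l * (-1) ^+ (k < l)%N.
Proof. by move=> Hk; rewrite /sg card_ltU1 // exprD. Qed.

Lemma sflip (k l : 'I_m) : k != l -> ((-1) ^+ (k < l)%N : P) = - (-1) ^+ (l < k)%N.
Proof.
move=> Hkl; case: (ltngtP k l) => H /=; rewrite ?expr1 ?expr0 ?opprK //.
by move: Hkl; rewrite (val_inj H) eqxx.
Qed.

Definition loc (b : bool) (s : P) (x : {set 'I_m}) (h : kelt) : P :=
  if b then 0 else s * h x.
Definition iota k (h : kelt) w := loc (k \in w) (sg w k) (k |: w) h.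
Definition eps l (h : kelt) w := loc (l \notin w) (sg (w :\ l) l) (w :\ l) h.

Lemma loc_ext b s x h1 h2 : (forall u, h1 u = h2 u) -> loc b s x h1 = loc b s x h2.
Proof. by move=> H; rewrite /loc H. Qed.
Lemma locD b s x (h1 h2 : kelt) : loc b s x (fun u => h1 u + h2 u) = loc b s x h1 + loc b s x h2.
Proof. by rewrite /loc; case: b; rewrite ?addr0 ?mulrDr. Qed.
Lemma locN b s x (h : kelt) : loc b s x (fun u => - h u) = - loc b s x h.
Proof. by rewrite /loc; case: b; rewrite ?oppr0 ?mulrN. Qed.
Lemma locM b s x (h : kelt) a : loc b s x (fun u => a * h u) = a * loc b s x h.
Proof. by rewrite /loc; case: b; rewrite ?mulr0 // mulrCA. Qed.
Lemma locZ b s x (h : kelt) (c : K) : loc b s x (fun u => c *: h u) = c *: loc b s x h.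
Proof. by rewrite /loc; case: b; rewrite ?scaler0 // scalerAr. Qed.
Lemma loc_sum b s x (I : Type) (r : seq I) (F : I -> kelt) :
  loc b s x (fun u => \sum_(y <- r) F y u) = \sum_(y <- r) loc b s x (F y).
Proof. rewrite /loc; case: b; first by rewrite big1. by rewrite mulr_sumr. Qed.

Lemma iota_eps k l (h : kelt) w :
  iota k (eps l h) w = (if k == l then h w else 0) - eps l (iota k h) w.
Proof.
rewrite /iota /eps /loc; case: (eqVneq k l) => [<-|Hkl].
- rewrite setU11 /= setD11 /=; case: (boolP (k \in w)) => Hk /=.
  + by rewrite mulrA sgsq' mul1r setD1K // subrr.
  + by rewrite subr0 setU1K // mulrA sgsq' mul1r.
- have Hlk : (l == k) = false by rewrite eq_sym (negbTE Hkl).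
  rewrite sub0r in_setU1 in_setD1 Hlk (negbTE Hkl) /=.
  case: (boolP (k \in w)) => Hk /=; first by case: (l \in w); rewrite /= ?oppr0 ?mulr0 ?oppr0.
  case: (boolP (l \in w)) => Hl /=; last by rewrite mulr0 oppr0.
  have E : (k |: w) :\ l = k |: (w :\ l).
    by apply/setP => x; rewrite !inE; case: (eqVneq x k) => [->|] /=; rewrite ?Hkl.
  have Hk' : k \notin w :\ l by rewrite !inE negb_and Hk orbT.
  have Hl' : l \notin w :\ l by rewrite !inE eqxx.
  have Ew : sg w k = sg (w :\ l) k * (-1) ^+ (l < k)%N by rewrite -{1}(setD1K Hl) sgU1.
  rewrite E Ew sgU1 // (sflip Hkl).
  transitivity (- (sg (w:\l) k * sg (w:\l) l * h (k|:w:\l) * ((-1)^+(l<k)%N * (-1)^+(l<k)%N))); first ring.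
  by rewrite sgsq mulr1; ring.
Qed.

Lemma iota_iota k k' (h : kelt) w :
  iota k (iota k' h) w = - iota k' (iota k h) w.
Proof.
rewrite /iota /loc; case: (eqVneq k k') => [<-|Hkk].
- by rewrite setU11; case: (k \in w); rewrite ?oppr0 // mulr0 oppr0.
have Hk'k : (k' == k) = false by rewrite eq_sym (negbTE Hkk).
rewrite !in_setU1 Hk'k (negbTE Hkk) /=.
case: (boolP (k \in w)) => Hk; case: (boolP (k' \in w)) => Hk' /=;
  rewrite ?oppr0 ?mulr0 ?oppr0 //.
rewrite setUCA sgU1 // sgU1 // (sflip Hkk).
ring.
Qed.

Lemma iota_ext k w (h1 h2 : kelt) : (forall u, h1 u = h2 u) -> iota k h1 w = iota k h2 w.
Proof. exact: loc_ext. Qed.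
Lemma eps_ext k w (h1 h2 : kelt) : (forall u, h1 u = h2 u) -> eps k h1 w = eps k h2 w.
Proof. exact: loc_ext. Qed.

Definition Dp (p : P) : P := 'X_[U_(i)] * mderiv j p.

Lemma DpD p q : Dp (p + q) = Dp p + Dp q.
Proof. by rewrite /Dp mderivD mulrDr. Qed.
Lemma DpN p : Dp (- p) = - Dp p.
Proof. by rewrite /Dp mderivN mulrN. Qed.
Lemma DpZ c p : Dp (c *: p) = c *: Dp p.
Proof. by rewrite /Dp mderivZ scalerAr. Qed.
Lemma Dp0 : Dp 0 = 0.
Proof. by rewrite /Dp mderiv0 mulr0. Qed.
Lemma Dp_sum (I : Type) (r : seq I) (F : I -> P) :
  Dp (\sum_(y <- r) F y) = \sum_(y <- r) Dp (F y).
Proof.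
elim: r => [|y r IH]; first by rewrite !big_nil Dp0.
by rewrite !big_cons DpD IH.
Qed.
Lemma DpM p q : Dp (p * q) = Dp p * q + p * Dp q.
Proof. rewrite /Dp mderivM mulrDr; ring. Qed.
Lemma Dp_sign e p : Dp ((-1) ^+ e * p) = (-1) ^+ e * Dp p.
Proof. by rewrite -signr_odd !mulr_sign; case: (odd e); rewrite ?DpN. Qed.

Lemma iotaD k w (h1 h2 : kelt) : iota k (fun u => h1 u + h2 u) w = iota k h1 w + iota k h2 w.
Proof. exact: locD. Qed.
Lemma iotaZ k w (h : kelt) c : iota k (fun u => c *: h u) w = c *: iota k h w.
Proof. exact: locZ. Qed.
Lemma iotaM k w (h : kelt) a : iota k (fun u => a * h u) w = a * iota k h w.
Proof. exact: locM. Qed.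
Lemma iota_sum k w (I : Type) (r : seq I) (F : I -> kelt) :
  iota k (fun u => \sum_(y <- r) F y u) w = \sum_(y <- r) iota k (F y) w.
Proof. exact: loc_sum. Qed.
Lemma iota_Dp k w (h : kelt) : iota k (fun u => Dp (h u)) w = Dp (iota k h w).
Proof. by rewrite /iota /loc; case: ifP; rewrite ?Dp0 // /sg Dp_sign. Qed.
Lemma epsN k w (h : kelt) : eps k (fun u => - h u) w = - eps k h w.
Proof. exact: locN. Qed.
Lemma epsM k w (h : kelt) a : eps k (fun u => a * h u) w = a * eps k h w.
Proof. exact: locM. Qed.
Lemma eps_sum k w (I : Type) (r : seq I) (F : I -> kelt) :
  eps k (fun u => \sum_(y <- r) F y u) w = \sum_(y <- r) eps k (F y) w.
Proof. exact: loc_sum. Qed.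

Definition cD (k : 'I_m) : K := ((f k) j)%:R.
Definition d0 (g : kelt) w : P := \sum_k 'X_[f k] * iota k g w.
Definition Dext (g : kelt) w : P := \sum_k cD k *: eps (tau k) (iota k g) w.
Definition Dfull (g : kelt) w : P := Dp (g w) + Dext g w.

Hypothesis HDX : forall k, Dp 'X_[f k] = cD k *: 'X_[f (tau k)].

Lemma sum_delta (F : 'I_m -> P) l (c : K) (a : P) :
  \sum_k F k * (c *: (if k == l then a else 0)) = F l * (c *: a).
Proof.
rewrite (bigD1 l) //= eqxx big1 ?addr0 // => x /negbTE ->.
by rewrite scaler0 mulr0.
Qed.

Lemma d0_Dfull g w : d0 (Dfull g) w = Dfull (d0 g) w.
Proof.
rewrite /d0 /Dfull.
have L1 k : iota k (Dfull g) w = Dp (iota k g w) +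
   \sum_k' cD k' *: ((if k == tau k' then iota k' g w else 0)
                     - eps (tau k') (iota k (iota k' g)) w).
  rewrite /Dfull iotaD iota_Dp /Dext iota_sum; congr (_ + _).
  by apply: eq_bigr => k' _; rewrite iotaZ iota_eps.
under eq_bigr => k _ do rewrite L1 mulrDr mulr_sumr.
rewrite big_split /=.
have L2 k' : eps (tau k') (iota k' (fun u => \sum_k 'X_[f k] * iota k g u)) w
     = - \sum_k 'X_[f k] * eps (tau k') (iota k (iota k' g)) w.
  rewrite (@eps_ext _ _ _ (fun u => \sum_k 'X_[f k] * - iota k (iota k' g) u)).
    rewrite eps_sum -sumrN; apply: eq_bigr => k _.
    by rewrite epsM epsN mulrN.
  move=> u; rewrite iota_sum; apply: eq_bigr => k _.
  by rewrite iotaM iota_iota.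
rewrite /Dext (eq_bigr _ (fun k' _ => congr1 (fun x => cD k' *: x) (L2 k'))).
rewrite Dp_sum (eq_bigr _ (fun k _ => DpM _ _)).
under [X in _ = X + _]eq_bigr => k _ do rewrite HDX.
rewrite big_split /=.
set A := \sum_(k < m) 'X_[f k] * Dp (iota k g w).
set B := \sum_(k < m) cD k *: 'X_[f (tau k)] * iota k g w.
set C := \sum_(k' < m) cD k' *: \sum_(k < m) 'X_[f k] * eps (tau k') (iota k (iota k' g)) w.
have HC : \sum_(k' < m) cD k' *: - \sum_(k < m) 'X_[f k] * eps (tau k') (iota k (iota k' g)) w = - C.
  by rewrite /C -sumrN; apply: eq_bigr => k' _; rewrite scalerN.
rewrite HC.
have HB : \sum_(k < m) \sum_(k' < m) 'X_[f k] * (cD k' *: ((if k == tau k' then iota k' g w else 0)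
                     - eps (tau k') (iota k (iota k' g)) w)) = B - C.
  transitivity (\sum_(k < m) \sum_(k' < m) 'X_[f k] * (cD k' *: (if k == tau k' then iota k' g w else 0))
      - \sum_(k < m) \sum_(k' < m) 'X_[f k] * (cD k' *: eps (tau k') (iota k (iota k' g)) w)).
    rewrite -sumrB; apply: eq_bigr => k _; rewrite -sumrB; apply: eq_bigr => k' _.
    by rewrite scalerBr mulrBr.
  congr (_ - _).
    rewrite exchange_big /=; apply: eq_bigr => k' _; rewrite sum_delta.
    by rewrite -scalerAl scalerAr.
  rewrite exchange_big /=; apply: eq_bigr => k' _; rewrite scaler_sumr.
  by apply: eq_bigr => k _; rewrite scalerAr.
rewrite HB; ring.
Qed.
End Kos.

End P3.

Module P4.
Import P1 P2 P3.
Local Open Scope ring_scope.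

Section Main.
Variables (K : fieldType) (n m : nat) (f : 'I_m -> 'X_{1..n}) (J : pred 'X_{1..n}) (t : nat).
Variables (i j : 'I_n) (tau : 'I_m -> 'I_m).
Hypothesis char0 : [pchar K] =i pred0.
Hypothesis HJ : borel_fixed (fun a => J a).
Hypothesis Hij : (i < j)%N.
Hypothesis Htau : forall k, (0 < f k j)%N -> f (tau k) = (f k - U_(j) + U_(i))%MM.
Local Notation kelt := (kelt K n m).
Local Notation P := {mpoly K[n]}.
Local Notation Dp := (@Dp K n i j).
Local Notation iota := P3.iota.
Local Notation eps := P3.eps.
Implicit Types (w u : {set 'I_m}) (k l : 'I_m) (p : P) (a b v : 'X_{1..n}) (g : kelt).

Lemma Dp_coef p b : (Dp p)@_(b + U_(i))%MM = p@_(b + U_(j))%MM *+ (b j).+1.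
Proof. by rewrite /P3.Dp mulrC addmC mcoeffMX mcoeff_mderiv. Qed.

Lemma Dp_coef0 p a : a i = 0%N -> (Dp p)@_a = 0.
Proof.
move=> Ha; apply/memN_msupp_eq0; rewrite /P3.Dp mulrC.
rewrite (perm_mem (msuppMX _ _)); apply/mapP => [[b _ Eb]].
by move: Ha; rewrite Eb mnmDE mnm1E eqxx.
Qed.

Lemma decU a (x : 'I_n) : a x != 0%N -> a = ((a - U_(x)) + U_(x))%MM.
Proof. by move=> H; rewrite submK // lep1mP. Qed.

Lemma Dp_msupp p v : v \in msupp (Dp p) ->
  exists a, a \in msupp p /\ (v + U_(j))%MM = (a + U_(i))%MM.
Proof.
move=> Hv; case: (eqVneq (v i) 0%N) => Hvi.
  by move: Hv; rewrite mcoeff_msupp Dp_coef0 // eqxx.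
move: Hv; rewrite (decU Hvi) mcoeff_msupp Dp_coef => Hc.
exists (v - U_(i) + U_(j))%MM; split.
  by rewrite mcoeff_msupp; apply: contraNneq Hc => ->; rewrite mul0rn.
by rewrite -!addmA [(U_(i) + _)%MM]addmC.
Qed.

Lemma zJ_Dp p : zJ J p -> zJ J (Dp p).
Proof.
move=> Hp a Ha; case: (eqVneq (a i) 0%N) => Hai; first exact: Dp_coef0.
move: Ha; rewrite (decU Hai) Dp_coef => Ha; rewrite Hp ?mul0rn //.
by apply/negP => /(proj2 HJ _ _ _ Hij); apply/negP.
Qed.

Lemma HDX k : Dp 'X_[f k] = cD K f j k *: 'X_[f (tau k)].
Proof.
rewrite /P3.Dp mderivX /cD -scalerAr -mpolyXD.
case: (posnP (f k j)) => Hk; first by rewrite Hk !scale0r.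
by rewrite Htau // addmC.
Qed.

Lemma msupp_sign e (p : P) v : v \in msupp ((-1) ^+ e * p) -> v \in msupp p.
Proof.
by rewrite -signr_odd mulr_sign; case: (odd e) => //; rewrite (perm_mem (msuppN _)).
Qed.

Lemma eps_iotaE l k (h : kelt) u :
  eps l (iota k h) u = if (l \in u) && (k \notin u :\ l)
     then sg K n (u :\ l) l * (sg K n (u :\ l) k * h (k |: (u :\ l))) else 0.
Proof. by rewrite /P3.eps /P3.iota /loc; case: (l \in u); case: (k \in u :\ l); rewrite /= ?mulr0. Qed.

Lemma card_swap l k u : l \in u -> k \notin u :\ l -> #|k |: (u :\ l)| = #|u|.
Proof.
by move=> Hl Hk; rewrite cardsU1 Hk (cardsD1 l u) Hl add1n.
Qed.

Lemma tau_neq k : (0 < f k j)%N -> tau k != k.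
Proof.
move=> Hk; apply/eqP => E; have := Htau Hk; rewrite E.
rewrite {1}(decU (lt0n_neq0 Hk)) => /addmI/eqP; rewrite eq_mnm1 => /eqP Eij.
by move: Hij; rewrite Eij ltnn.
Qed.

Lemma Dext_msupp (g : kelt) u v : v \in msupp (Dext f j tau g u) ->
  exists u0, egt f u0 u /\ v \in msupp (g u0).
Proof.
rewrite /Dext => /msupp_sum_le /flatten_mapP [k _].
case: (posnP (f k j)) => Hk.
  by rewrite /cD Hk scale0r msupp0.
move/msuppZ_le; rewrite eps_iotaE; case: ifP => [/andP [Hl Hk']|]; last by rewrite msupp0.
move/msupp_sign/msupp_sign => Hv.
exists (k |: (u :\ tau k)); split => //.
rewrite /egt; apply/orP; left.
rewrite (fprodD1 f Hl) (fprodU1 f Hk') revgt_add.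
rewrite Htau // {2}(decU (lt0n_neq0 Hk)).
by rewrite ![(f k - _ + _)%MM]addmC revgt_add revgt_U.
Qed.

Definition gD (g : kelt) : kelt := fun u => redJ J (Dfull f i j tau g u).

Lemma kdiff_d0 (h : kelt) w : kdiff f J h w = redJ J (d0 f h w).
Proof.
rewrite /kdiff /d0; congr (redJ J _); rewrite big_mkcond /=; apply: eq_bigr => k _.
rewrite /P3.iota /loc; case: (k \in w) => /=; first by rewrite mulr0.
by rewrite /sg; ring.
Qed.

Lemma redJ_zero : redJ J 0 = 0 :> P.
Proof. by apply/(redJ0 J (0:P)) => a _; rewrite mcoeff0. Qed.

Lemma gD_Kt g : in_Kt J t g -> in_Kt J t (gD g).
Proof.
move=> Hg u; split; last by rewrite /gD redJK.
move=> Hu; rewrite /gD /Dfull (proj1 (Hg u) Hu) Dp0 add0r /Dext big1 ?redJ_zero //.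
move=> k _; rewrite eps_iotaE; case: ifP => [/andP [Hl Hk]|]; last by rewrite scaler0.
by rewrite (proj1 (Hg _)) ?mulr0 ?scaler0 // card_swap.
Qed.

Lemma cycle_zJ g w : cycle_t f J t g -> zJ J (d0 f g w).
Proof. by move=> [_ Hc]; apply/redJ0; rewrite -kdiff_d0 Hc. Qed.

Lemma gD_cycle g : cycle_t f J t g -> cycle_t f J t (gD g).
Proof.
move=> Hg; split; first exact: gD_Kt (proj1 Hg).
move=> w; rewrite kdiff_d0; apply/redJ0.
have Jmon : monomial_ideal J := proj1 HJ.
rewrite -(subrK (d0 f (Dfull f i j tau g) w) (d0 f (gD g) w)); apply: zJD.
  rewrite /d0 -sumrB; apply: zJ_sum => k _; rewrite -mulrBr; apply: zJM => //.
  rewrite /P3.iota /loc; case: ifP => _; first by rewrite subrr; exact: zJ0.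
  by rewrite -mulrBr; apply: zJM => //; exact: redJ_sub.
rewrite d0_Dfull; last exact: HDX.
apply: zJD; first by apply: zJ_Dp; exact: cycle_zJ.
apply: zJ_sum => k _; apply: zJZ; rewrite eps_iotaE; case: ifP => _; last exact: zJ0.
by apply: zJM => //; apply: zJM => //; exact: cycle_zJ.
Qed.

Lemma natr_neq0 (c : K) (e : nat) : c != 0 -> c *+ e.+1 != 0.
Proof.
move=> Hc; rewrite -mulr_natr mulf_eq0 negb_or Hc /=.
by move/pcharf0P: char0 => ->.
Qed.

Lemma init_step g u z : cycle_t f J t g -> is_init f g u (z + U_(j))%MM ->
  ~~ J (z + U_(i))%MM -> is_init f (gD g) u (z + U_(i))%MM.
Proof.
move=> Hg [Hw Hmax] HJw; split.
  rewrite mcoeff_msupp /gD redJE (negbTE HJw) /Dfull mcoeffD Dp_coef.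
  have -> : (Dext f j tau g u)@_(z + U_(i)) = 0.
    apply/memN_msupp_eq0/negP => /Dext_msupp [u0 [H1 H2]].
    case: (eqVneq u0 u) => [E|Hne]; first by move: H1; rewrite E egt_irr.
    have := Hmax u0 _ H2; rewrite Hne /= => /(_ isT); rewrite /termgt.
    rewrite eq_sym (negbTE Hne) orbF => H3; exact: egt_asym H1 H3.
  by rewrite addr0; apply: natr_neq0; rewrite -mcoeff_msupp.
move=> u' v' /redJ_msupp [Hv' _] Hne; move: Hv'; rewrite /Dfull => /msuppD_le.
rewrite mem_cat => /orP [/Dp_msupp [a [Ha Eva]]|/Dext_msupp [u0 [H1 H2]]].
- case: (eqVneq u' u) => [E|Hne'].
    subst u'; move: Hne; rewrite eqxx /= => Hne.
    case: (eqVneq a (z + U_(j))%MM) => [Ea|Hna].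
      move: Eva; rewrite Ea -addmA [(U_(j) + _)%MM]addmC addmA => /addIm Ev.
      by move: Hne; rewrite Ev eqxx.
    have := Hmax u a Ha; rewrite Hna orbT => /(_ isT).
    rewrite /termgt egt_irr eqxx /= => Hr.
    by rewrite -(revgt_add _ _ U_(j)) Eva -addmA [(U_(i) + _)%MM]addmC addmA revgt_add.
  have := Hmax u' a Ha; rewrite Hne' /= => /(_ isT).
  by rewrite /termgt eq_sym (negbTE Hne') orbF => ->.
- rewrite /termgt; apply/orP; left.
  case: (eqVneq u0 u) => [E|Hne0]; first by rewrite -E.
  have := Hmax u0 v' H2; rewrite Hne0 /= => /(_ isT).
  rewrite /termgt eq_sym (negbTE Hne0) orbF => H3; exact: egt_trans H3 H1.
Qed.
End Main.

End P4.

Module P5.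
Import P1 P2 P3 P4.
Local Open Scope ring_scope.

Section Fin.
Variables (K : fieldType) (n m : nat) (f : 'I_m -> 'X_{1..n}) (J : pred 'X_{1..n}) (t : nat).
Local Notation kelt := (kelt K n m).
Local Notation P := {mpoly K[n]}.

Lemma in_Zt_char (h : kelt) : in_Zt f J t h -> forall u v, v \in msupp (h u) ->
  exists (g : kelt) w1, cycle_t f J t g /\ is_init f g u w1 /\ lem w1 v.
Proof.
move=> H; apply: (H (fun h => forall u v, v \in msupp (h u) ->
  exists (g : kelt) w1, cycle_t f J t g /\ is_init f g u w1 /\ lem w1 v)).
- split; first by move=> u v; rewrite mcoeff_msupp mcoeff0 eqxx.
  split.
    by move=> g1 g2 H1 H2 u v /msuppD_le; rewrite mem_cat => /orP [/H1|/H2].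
  move=> s g1 H1 u v /redJ_msupp [/msuppM_le /allpairsP [[m1 m2] /= [_ Hm2 ->]] _].
  have [g [w1 [Hc [Hi Hl]]]] := H1 u m2 Hm2.
  by exists g, w1; split => //; split => //; apply: lepm_trans Hl (lem_addl _ _).
- move=> e [g [u0 [w0 [Hc [Hi ->]]]]] u v; rewrite /eterm.
  case: eqP => [->|_]; last by rewrite mcoeff_msupp mcoeff0 eqxx.
  move/redJ_msupp => []; rewrite msuppX mem_seq1 => /eqP -> _.
  by exists g, w0; split => //; split => //; exact: lepm_refl.
Qed.

Lemma lem_mdeg_eq (a b : 'X_{1..n}) : lem a b -> mdeg a = mdeg b -> a = b.
Proof.
move=> Hab Hd; rewrite -(submK Hab) in Hd *.
move: Hd; rewrite mdegD -{1}(add0n (mdeg a)) => /addIn /esym /eqP.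
by rewrite mdeg_eq0 => /eqP ->; rewrite add0m.
Qed.

Lemma lem_shift (z a : 'X_{1..n}) (x y : 'I_n) :
  lem (z + U_(x))%MM (a + U_(x))%MM -> lem (z + U_(y))%MM (a + U_(y))%MM.
Proof.
move/mnm_lepP => H; apply/mnm_lepP => l; have := H l.
by rewrite !mnmDE !mnm1E !leq_add2r.
Qed.

Lemma lem_drop (w a : 'X_{1..n}) (x y : 'I_n) : w y = 0%N ->
  lem w (a + U_(y))%MM -> lem w (a + U_(x))%MM.
Proof.
move=> Hw /mnm_lepP H; apply/mnm_lepP => l; have := H l.
rewrite !mnmDE !mnm1E; case: (eqVneq y l) => [<-|_]; first by rewrite Hw.
by rewrite addn0 => /leq_trans; apply; apply: leq_addr.
Qed.
End Fin.


End P5.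

Import P1 P2 P3 P4 P5.
Local Open Scope ring_scope.

Theorem lemma4p2 (K : fieldType) (n m : nat)
  (I J : pred 'X_{1..n}) (f : 'I_m -> 'X_{1..n}) (t : nat) :
  [pchar K] =i pred0 ->
  borel_fixed (fun a => I a) -> borel_fixed (fun a => J a) ->
  (* f_1, ..., f_m are the minimal monomial generators of I *)
  (forall a, I a <-> exists i, lem (f i) a) ->
  (forall i j, lem (f i) (f j) -> i = j) ->
  (* all of the same degree *)
  (forall i j, mdeg (f i) = mdeg (f j)) ->
  forall u : {set 'I_m}, #|u| = t ->
    borel_fixed (L_ideal K f J t u).
Proof.
move=> char0 HI HJ HIf Hinj Hdeg u Hu; split.
  move=> a b [w [Hw HJw]]; exists w; split => //.
  exact: lepm_trans Hw (lem_addr _ _).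
move=> a i j Hij [w [Hw Hor]].
pose tau k := odflt k [pick l | f l == (f k - U_(j) + U_(i))%MM].
have Htau : forall k, (0 < f k j)%N -> f (tau k) = (f k - U_(j) + U_(i))%MM.
  move=> k Hk; rewrite /tau; case: pickP => [l /eqP //|Hn]; exfalso.
  have HIk : I (f k - U_(j) + U_(i))%MM.
    apply: (proj2 HI _ _ _ Hij); rewrite -decU ?lt0n_neq0 //.
    by apply/HIf; exists k; exact: lepm_refl.
  move/HIf: HIk => [l Hl].
  have E := lem_mdeg_eq Hl.
  have Hd : mdeg (f k - U_(j) + U_(i))%MM = mdeg (f k).
    by rewrite {2}(decU (lt0n_neq0 Hk)) !mdegD !mdeg1.
  by have := Hn l; rewrite E ?eqxx // Hd (Hdeg l k).
have gen : forall (g : kelt K n m) w1, cycle_t f J t g -> is_init f g u w1 ->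
    in_Zt f J t (eterm K J u w1).
  by move=> g w1 Hc Hi Q _ HG; apply: HG; exists g, u, w1.
have step : forall w1, lem w1 (a + U_(j))%MM ->
    (J w1 \/ exists g : kelt K n m, cycle_t f J t g /\ is_init f g u w1) ->
    L_ideal K f J t u (a + U_(i))%MM.
  move=> w1 Hw1 H; case: (posnP (w1 j)) => Hw1j.
    exists w1; split; first exact: lem_drop Hw1j Hw1.
    case: H => [H|[g [Hc Hi]]]; [by left | right; exact: gen Hc Hi].
  have Ew1 := decU (lt0n_neq0 Hw1j); set z := (w1 - U_(j))%MM in Ew1.
  exists (z + U_(i))%MM; split.
    by apply: (lem_shift (x := j)); rewrite -Ew1.
  case: (boolP (J (z + U_(i))%MM)) => HJz; first by left.
  case: H => [H|[g [Hc Hi]]].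
    by move: HJz; rewrite (proj2 HJ _ _ _ Hij) //; rewrite -Ew1.
  right; apply: (gen _ _ (gD_cycle HJ Hij Htau Hc)).
  by apply: (init_step char0 Hij Htau Hc) => //; rewrite -Ew1.
case: Hor => [HJw|HZ]; first by apply: step Hw _; left.
case: (boolP (J w)) => HJw; first by apply: step Hw _; left.
have Hmem : w \in msupp (eterm K J u w u).
  by rewrite /eterm eqxx mcoeff_msupp redJE (negbTE HJw) mcoeffX eqxx oner_neq0.
have [g [w1 [Hc [Hi Hl]]]] := in_Zt_char HZ Hmem.
by apply: (step w1 (lepm_trans Hl Hw)); right; exists g.
Qed.
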